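(* Let $\mathcal{C}$ be a finite set of latent classes with cardinality $N_{\mathcal{C}}$, let $\rho$ be a probability distribution on $\mathcal{C}$ with $\rho(c)>0$ for all $c$, and for each $c\in\mathcal{C}$ let $\mathcal{D}_c$ be a distribution on a feature space $\mathcal{X}$. Let $N$ be a number of negative samples satisfying $N=\Omega(N_{\mathcal{C}}\log N_{\mathcal{C}})$. Then for any encoder $f:\mathcal{X}\to\mathbb{R}^d$, $$L_{\mathrm{sup}}(f,\mathcal{C})\le L^\mu_{\mathrm{sup}}(f,\mathcal{C})\le \frac{1}{p^\rho_{cc}(N)}L^N_{\mathrm{un}}(f),$$ where $p^\rho_{cc}(N)$ is the probability that $N$ independent draws from $\rho$ include every element of $\mathcal{C}$ at least once (i.e. all coupons are collected after $N$ draws in an $N_{\mathcal{C}}$-coupon collector problem with draws from $\rho$).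
   Context: Positive pairs are drawn from $\mathcal{D}_{\mathrm{sim}}(x,x^+)=\sum_{c\in\mathcal{C}}\rho(c)\mathcal{D}_c(x)\mathcal{D}_c(x^+)$ and negatives from $\mathcal{D}_{\mathrm{neg}}(x^-)=\sum_{c\in\mathcal{C}}\rho(c)\mathcal{D}_c(x^-)$. The unsupervised loss with $N$ negatives is $$L^N_{\mathrm{un}}(f)=\mathbb{E}_{(x,x^+)\sim\mathcal{D}_{\mathrm{sim}},\,X^-\sim\mathcal{D}_{\mathrm{neg}}^{\otimes N}}\Big[-\log\frac{\exp(f(x)^Tf(x^+))}{\exp(f(x)^Tf(x^+))+\sum_{x^-\in X^-}\exp(f(x)^Tf(x^-))}\Big],$$ where $X^-$ is a tuple of $N$ i.i.d. draws from $\mathcal{D}_{\mathrm{neg}}$. With $\mathcal{D}_{\mathcal{C}}(x,c)=\rho(c)\mathcal{D}_c(x)$, the supervised loss is $$L_{\mathrm{sup}}(f,\mathcal{C})=\inf_{W\in\mathbb{R}^{N_{\mathcal{C}}\times d}}\mathbb{E}_{(x,c)\sim\mathcal{D}_{\mathcal{C}}}\Big[-\log\frac{\exp((Wf(x))_c)}{\sum_{c'\in\mathcal{C}}\exp((Wf(x))_{c'})}\Big],$$ and $L^\mu_{\mathrm{sup}}(f,\mathcal{C})$ is the same expectation evaluated at the mean classifier $W^\mu$ whose row indexed by $c$ is $\mathbb{E}_{x\sim\mathcal{D}_c}[f(x)]$. *)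

(* Defs.v *)
From HB Require Import structures.
From mathcomp Require Import all_boot all_order all_algebra.
From mathcomp Require Import all_classical all_reals all_analysis.
Set Implicit Arguments. Unset Strict Implicit. Unset Printing Implicit Defensive.
Import Order.TTheory GRing.Theory Num.Theory.
Import numFieldNormedType.Exports.
Local Open Scope classical_set_scope.
Local Open Scope ring_scope.

Section Contrastive.
Variables (R : realType) (d : measure_display) (X : measurableType d) (C : finType).
Variables (rho : C -> R) (D : C -> probability X R) (n : nat).
Implicit Types (f : X -> 'rV[R]_n).

Definition dotr (u v : 'rV[R]_n) : R := \sum_(j < n) u 0 j * v 0 j.

(* cross-entropy (softmax) loss of the scores s : 'cV_(#|C|) at label c;
   row c of W is the row indexed by enum_rank c *)
Definition softmax_loss (s : 'cV[R]_(#|C|)) (c : C) : R :=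
  - ln (expR (s (enum_rank c) 0) / \sum_(c' : C) expR (s (enum_rank c') 0)).

Definition sup_loss_W f (W : 'M[R]_(#|C|, n)) : \bar R :=
  \sum_(c : C) (rho c)%:E *
     \int[D c]_x (softmax_loss (W *m (f x)^T) c)%:E.

Definition L_sup f : \bar R := ereal_inf (range (sup_loss_W f)).

Definition W_mu f : 'M[R]_(#|C|, n) :=
  \matrix_(i < #|C|, j < n) Rintegral (D (enum_val i)) setT (fun x => f x 0 j).

Definition L_sup_mu f : \bar R := sup_loss_W f (W_mu f).

(* Expectation over X^- ~ D_neg^{(x) N}, D_neg = sum_c rho(c) D_c,
   written as the iterated integral (the tuple is built as a list). *)
Fixpoint neg_expect (N : nat) (g : seq X -> \bar R) : \bar R :=
  match N with
  | 0 => g [::]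
  | N'.+1 => \sum_(c : C) (rho c)%:E *
              \int[D c]_y neg_expect N' (fun s => g (y :: s))
  end.

Definition un_loss_pt f (x xp : X) (s : seq X) : R :=
  - ln (expR (dotr (f x) (f xp)) /
        (expR (dotr (f x) (f xp)) + \sum_(y <- s) expR (dotr (f x) (f y)))).

Definition L_un f (N : nat) : \bar R :=
  \sum_(c : C) (rho c)%:E *
    \int[D c]_x \int[D c]_xp
       neg_expect N (fun s => (un_loss_pt f x xp s)%:E).

Definition pcc (N : nat) : R :=
  \sum_(t : {ffun 'I_N -> C} | [forall c, exists i, t i == c])
     \prod_(i < N) rho (t i).

End Contrastive.

(* Main.v *)
Require Import Defs.
From HB Require Import structures.
From mathcomp Require Import all_boot all_order all_algebra.
From mathcomp Require Import all_classical all_reals all_analysis.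
From mathcomp Require Import ring lra.
Import Order.TTheory GRing.Theory Num.Theory.
Local Open Scope classical_set_scope.
Local Open Scope ring_scope.
Set Implicit Arguments. Unset Strict Implicit. Unset Printing Implicit Defensive.

Section Aux.
Context (R : realType) (d : measure_display) (X : measurableType d).

Lemma le_int_ge0 (mu : measure X R) (f g : X -> \bar R) :
  (forall x, 0 <= f x)%E -> (forall x, f x <= g x)%E ->
  (\int[mu]_x f x <= \int[mu]_x g x)%E.
Proof.
move=> f0 fg; have g0 x : (0 <= g x)%E by exact: le_trans (f0 x) (fg x).
rewrite !ge0_integralTE //; apply: le_ereal_sup => _ [h hf <-].
by exists h => // x; exact: le_trans (hf x) (fg x).
Qed.

Lemma le_int_lb (mu : measure X R) (h : X -> R) (G : X -> \bar R) :
  mu.-integrable setT (fun x => (h x)%:E) ->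
  (forall x, 0 <= G x)%E -> (forall x, (h x)%:E <= G x)%E ->
  (\int[mu]_x (h x)%:E <= \int[mu]_x G x)%E.
Proof.
move=> ih G0 hG; rewrite integralE.
apply: (@le_trans _ _ (\int[mu]_x ((fun x => (h x)%:E)^\+ x))%E).
  rewrite leeBlDr; last exact: integrable_neg_fin_num.
  by apply: leeDl; apply: integral_ge0 => x _; exact: funeneg_ge0.
apply: le_int_ge0 => x; first exact: funepos_ge0.
by rewrite funeposE ge_max hG G0.
Qed.

End Aux.

Section Cover.
Context (R : realType) (C : finType) (rho : C -> R).

Definition cov N (B : {set C}) (t : {ffun 'I_N -> C}) : bool :=
  [forall k, (k \in B) ==> [exists i, t i == k]].

Definition Wt N (B : {set C}) : R :=
  \sum_(t : {ffun 'I_N -> C} | cov B t) \prod_(i < N) rho (t i).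

Definition fcons N (k : C) (t : {ffun 'I_N -> C}) : {ffun 'I_N.+1 -> C} :=
  [ffun i => if unlift ord0 i is Some j then t j else k].

Lemma fcons0 N k (t : {ffun 'I_N -> C}) : fcons k t ord0 = k.
Proof. by rewrite ffunE unlift_none. Qed.

Lemma fconsS N k (t : {ffun 'I_N -> C}) j : fcons k t (lift ord0 j) = t j.
Proof. by rewrite ffunE liftK. Qed.

Lemma cov_fcons N B k (t : {ffun 'I_N -> C}) : cov B (fcons k t) = cov (B :\ k) t.
Proof.
apply/forallP/forallP => H j; apply/implyP => Hj.
- rewrite in_setD1 in Hj; case/andP: Hj => jk jB.
  have /existsP[i] := implyP (H j) jB.
  case: (unliftP ord0 i) => [i' ->|->].
    by rewrite fconsS => e; apply/existsP; exists i'.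
  by rewrite fcons0 => /eqP e; rewrite e eqxx in jk.
- case: (eqVneq j k) => [->|jk]; first by apply/existsP; exists ord0; rewrite fcons0.
  have jB' : j \in B :\ k by rewrite in_setD1 jk Hj.
  have /existsP[i e] := implyP (H j) jB'.
  by apply/existsP; exists (lift ord0 i); rewrite fconsS.
Qed.

Lemma Wt_rec N B : Wt N.+1 B = \sum_k rho k * Wt N (B :\ k).
Proof.
rewrite /Wt (reindex (fun p : C * {ffun 'I_N -> C} => fcons p.1 p.2)) /=; last first.
  apply: onW_bij; exists (fun t : {ffun 'I_N.+1 -> C} => (t ord0, [ffun j => t (lift ord0 j)])).
    case=> k t /=; rewrite fcons0; congr pair; apply/ffunP => j.
    by rewrite ffunE fconsS.
  move=> t; apply/ffunP => i; rewrite ffunE /=.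
  by case: (unliftP ord0 i) => [j ->|->]; rewrite ?ffunE.
under [RHS]eq_bigr do rewrite mulr_sumr.
rewrite pair_big_dep /=; apply: eq_big => [[k t]|[k t] _] /=.
  by rewrite cov_fcons.
rewrite big_ord_recl fcons0; congr (_ * _); apply: eq_bigr => i _.
by rewrite ffunE liftK.
Qed.

Lemma Wt_ge0 N B : (forall k, 0 <= rho k) -> 0 <= Wt N B.
Proof. by move=> r0; apply: sumr_ge0 => t _; apply: prodr_ge0. Qed.

Lemma Wt_mono N (B B' : {set C}) : (forall k, 0 <= rho k) -> B \subset B' -> Wt N B' <= Wt N B.
Proof.
move=> r0 sB; rewrite /Wt [X in _ <= X]big_mkcond [X in X <= _]big_mkcond /=.
apply: ler_sum => t _; case: ifP => cB'; last by case: ifP => // _; apply: prodr_ge0.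
have -> : cov B t; last by [].
apply/forallP => k; apply/implyP => kB.
move: cB' => /forallP /(_ k) /implyP; apply; exact: (fintype.subsetP sB).
Qed.

Lemma Wt0 B : Wt 0 B = (B == finset.set0)%:R.
Proof.
rewrite /Wt; case: eqP => [->|/eqP/set0Pn[k kB]].
  rewrite (eq_bigl xpredT); last first.
    by move=> t; apply/forallP => k; rewrite finset.in_set0.
  under eq_bigr do rewrite big_ord0.
  by rewrite sumr_const card_ffun card_ord expn0.
rewrite big_pred0 // => t; apply/negP => /forallP/(_ k); rewrite kB /=.
by case/existsP => -[].
Qed.

Lemma Wt_pos N : (forall k, 0 < rho k) -> (#|C| <= N)%N -> (0 < #|C|)%N ->
  0 < Wt N [set: C].
Proof.
move=> r0 CN C0.
have c0 : C := enum_val (Ordinal C0).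
pose t := [ffun i : 'I_N => nth c0 (enum C) i].
have ct : cov [set: C] t.
  apply/forallP => k; apply/implyP => _.
  have hk : (index k (enum C) < N)%N.
    apply: leq_trans CN; rewrite cardE index_mem mem_enum //.
  apply/existsP; exists (Ordinal hk); rewrite ffunE /= nth_index //.
  by rewrite mem_enum.
rewrite /Wt (bigD1 t) //=.
apply: (@lt_le_trans _ _ (\prod_(i < N) rho (t i))).
  by apply: prodr_gt0 => i _.
rewrite lerDl; apply: sumr_ge0 => s _; apply: prodr_ge0 => i _; exact/ltW.
Qed.

End Cover.

Section Claim.
Context (R : realType) (d : measure_display) (X : measurableType d) (C : finType).
Context (rho : C -> R) (D : C -> probability X R).
Hypothesis rho0 : forall k, 0 <= rho k.
Variables (u : X -> R) (v p : C -> R).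
Hypothesis intu : forall k, (D k).-integrable setT (fun y => (u y)%:E).
Hypothesis intuv : forall k, (\int[D k]_y (u y)%:E = (v k)%:E)%E.

Lemma int_aff_integrable k al be :
  (D k).-integrable setT (fun y => (al + be * u y)%:E).
Proof.
rewrite (_ : (fun y => _) = (fun y => al%:E + be%:E * (u y)%:E)%E); last first.
  by apply/funext => y; rewrite EFinD EFinM.
apply: (@integrableD _ _ _ _ _ measurableT (fun _ => al%:E) (fun y => be%:E * (u y)%:E)%E).
  exact: finite_measure_integrable_cst.
by apply: integrableZl => //; exact: intu.
Qed.

Lemma int_affine k al be :
  (\int[D k]_y (al + be * u y)%:E = (al + be * v k)%:E)%E.
Proof.
under eq_integral do rewrite EFinD EFinM.
rewrite (@integralD _ _ _ _ _ measurableT (fun _ => al%:E) (fun y => be%:E * (u y)%:E)%E); last 2 first.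
- exact: finite_measure_integrable_cst.
- by apply: integrableZl => //; exact: intu.
rewrite integral_cst //.
rewrite [X in (_ * X + _)%E](_ : _ = 1%E); last exact: probability_setT.
rewrite mule1 integralZl //; last by apply: intu.
rewrite [X in (_ + _ * X)%E](_ : _ = (v k)%:E); last exact: intuv.
by rewrite -EFinM -EFinD.
Qed.

Lemma ne_ge0 N g : (forall s, 0 <= g s)%E -> (0 <= neg_expect rho D N g)%E.
Proof.
elim: N g => [|N IH] g g0 /=; first exact: g0.
apply: sume_ge0 => k _; apply: mule_ge0; first by rewrite lee_fin.
by apply: integral_ge0 => y _; apply: IH.
Qed.

Lemma int_lb_aff k al be (G : X -> \bar R) : (forall y, 0 <= G y)%E ->
  (forall y, (al + be * u y)%:E <= G y)%E ->
  ((al + be * v k)%:E <= \int[D k]_y G y)%E.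
Proof.
move=> G0 HG; rewrite -int_affine; apply: le_int_lb => //.
exact: int_aff_integrable.
Qed.

Lemma loss_ge0 (a S : R) : 0 <= S -> 0 <= ln (expR a + S) - a.
Proof.
move=> S0; rewrite subr_ge0 -{1}(expRK a) ler_ln ?posrE ?expR_gt0 ?lerDl //.
by apply: (lt_le_trans (expR_gt0 a)); rewrite lerDl.
Qed.

Lemma sum_exp_gt0 (c : C) (w : C -> R) : 0 < \sum_k expR (w k).
Proof.
apply: (lt_le_trans (expR_gt0 (w c))); rewrite (bigD1 c) //= lerDl.
by apply: sumr_ge0 => *; exact/ltW/expR_gt0.
Qed.

Lemma sum_exp_ge0 (s : seq X) : 0 <= \sum_(y <- s) expR (u y).
Proof. by apply: sumr_ge0 => *; exact/ltW/expR_gt0. Qed.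

Variables (c : C) (a K : R).
Hypothesis gibbs : forall w : C -> R, w c = a ->
  K + \sum_k p k * (w k - v k) <= ln (\sum_k expR (w k)) - a.

Lemma claim N : forall (B : {set C}) (w : C -> R) (S0 : R) (g : seq X -> \bar R),
  c \notin B -> w c = a -> 0 <= S0 -> \sum_(k in ~: B) expR (w k) <= expR a + S0 ->
  (forall s, g s = (ln (expR a + S0 + \sum_(y <- s) expR (u y)) - a)%:E) ->
  ((Wt rho N B * (K + \sum_(k in ~: B) p k * (w k - v k)))%:E
     <= neg_expect rho D N g)%E.
Proof.
elim: N => [|N IH] B w S0 g cB wc S00 inv Hg /=.
  rewrite Wt0 Hg big_nil addr0 lee_fin.
  case: eqP => [B0|_]; last by rewrite mul0r loss_ge0.
  rewrite mul1r.
  have E : forall F : C -> R, \sum_(k in ~: B) F k = \sum_k F k.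
    by move=> F; apply: eq_bigl => k; rewrite B0 finset.setC0 finset.in_setT.
  rewrite E; apply: le_trans (gibbs wc) _.
  rewrite lerD2r ler_ln ?posrE; [by rewrite -E | exact: (sum_exp_gt0 c) |].
  by apply: (lt_le_trans (expR_gt0 a)); rewrite lerDl.
rewrite Wt_rec mulr_suml -sumEFin; apply: lee_sum => k _.
rewrite -mulrA EFinM; apply: lee_wpmul2l; first by rewrite lee_fin.
set M := K + _.
have gge0 : forall y s, (0 <= g (y :: s))%E.
  move=> y s; rewrite Hg lee_fin -addrA; apply: loss_ge0; apply: addr_ge0 => //.
  exact: sum_exp_ge0.
have Hg' : forall y s, g (y :: s) =
    (ln (expR a + (S0 + expR (u y)) + \sum_(y <- s) expR (u y)) - a)%:E.
  by move=> y s; rewrite Hg big_cons !addrA.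
case kB: (k \in B); last first.
  have BE : B :\ k = B.
    by apply/setP => j; rewrite !inE; case: eqVneq => // ->; rewrite kB.
  rewrite BE -[X in X%:E]addr0 -(mul0r (v k)); apply: int_lb_aff.
    by move=> y; apply: ne_ge0 => s; exact: gge0.
  move=> y; rewrite mul0r addr0; apply: (IH B w (S0 + expR (u y))) => //.
  - by apply: addr_ge0 => //; exact/ltW/expR_gt0.
  - by apply: (le_trans inv); rewrite addrA lerDl; exact/ltW/expR_gt0.
set W' := Wt rho N (B :\ k).
have ck : c != k by apply: contraNneq cB => ->; rewrite kB.
have Ck : ~: (B :\ k) = k |: ~: B.
  by apply/setP => j; rewrite !inE negb_and negbK.
have kCB : k \notin ~: B by rewrite inE kB.
have Ew : forall (F : C -> R -> R) y, \sum_(j in ~: B) F j (if j == k then u y else w j)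
    = \sum_(j in ~: B) F j (w j).
  move=> F y; apply: eq_bigr => j; rewrite inE => jB.
  have -> : (j == k) = false by apply/negbTE; apply: contraNneq jB => ->; rewrite kB.
  by [].
have -> : W' * M = (W' * (M - p k * v k)) + (W' * p k) * v k by ring.
apply: int_lb_aff.
  by move=> y; apply: ne_ge0 => s; exact: gge0.
move=> y.
have H := IH (B :\ k) (fun j => if j == k then u y else w j) (S0 + expR (u y))
  (fun s => g (y :: s)).
rewrite Ck big_setU1 //= big_setU1 //= eqxx in H.
rewrite (Ew (fun _ x => expR x)) (Ew (fun j x => p j * (x - v j))) in H.
rewrite /M; apply: le_trans (H _ _ _ _ _); last 5 first.
- by rewrite in_setD1 negb_and cB orbT.
- by rewrite (negbTE ck).
- by apply: addr_ge0 => //; exact/ltW/expR_gt0.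
- by rewrite addrC addrA lerD2r.
- exact: (Hg' y).
by rewrite /W' lee_fin le_eqVlt; apply/orP; left; apply/eqP; ring.
Qed.

End Claim.

Section Soft.
Context (R : realType) (C : finType).

Lemma sumexp_gt0 (c : C) (w : C -> R) : 0 < \sum_k expR (w k).
Proof.
apply: (lt_le_trans (expR_gt0 (w c))); rewrite (bigD1 c) //= lerDl.
by apply: sumr_ge0 => *; exact/ltW/expR_gt0.
Qed.

Lemma softmaxE (s : 'cV[R]_(#|C|)) (c : C) :
  softmax_loss s c = ln (\sum_k expR (s (enum_rank k) 0)) - s (enum_rank c) 0.
Proof.
have Z0 := sumexp_gt0 c (fun k => s (enum_rank k) 0).
rewrite /softmax_loss lnM ?posrE ?expR_gt0 ?invr_gt0 // lnV ?posrE // expRK.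
by rewrite opprD opprK addrC.
Qed.

Lemma softmax_ge0 (s : 'cV[R]_(#|C|)) (c : C) : 0 <= softmax_loss s c.
Proof.
have Z0 := sumexp_gt0 c (fun k => s (enum_rank k) 0).
rewrite softmaxE subr_ge0 -{1}(expRK (s (enum_rank c) 0)) ler_ln ?posrE ?expR_gt0 //.
rewrite (bigD1 c) //= lerDl.
by apply: sumr_ge0 => *; exact/ltW/expR_gt0.
Qed.

Lemma gibbs_gen (c : C) (v w : C -> R) :
  ln (\sum_k expR (v k)) +
  \sum_k (expR (v k) / \sum_j expR (v j)) * (w k - v k) <= ln (\sum_k expR (w k)).
Proof.
set Z := \sum_j expR (v j); set S := \sum_k expR (w k).
have Z0 : 0 < Z := sumexp_gt0 c v.
have S0 : 0 < S := sumexp_gt0 c w.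
set p := fun k => expR (v k) / Z.
rewrite -/(p _).
have p0 : forall k, 0 <= p k.
  by move=> k; rewrite /p divr_ge0 // ltW // expR_gt0.
have sp : \sum_k p k = 1.
  by rewrite /p -mulr_suml -/Z mulfV // gt_eqF.
set L := ln S - ln Z.
have eL : expR L = S / Z by rewrite /L expRD expRN !lnK ?posrE.
have e : forall k, p k * expR (w k - v k - L) = expR (w k) / S.
  move=> k; rewrite !expRD !expRN eL /p.
  have ev : expR (v k) != 0 by rewrite gt_eqF // expR_gt0.
  by field; rewrite ev gt_eqF // gt_eqF.
have H1 : \sum_k p k * (w k - v k - L) <= 0.
  apply: (@le_trans _ _ (\sum_k (p k * expR (w k - v k - L) - p k))).
    apply: ler_sum => k _.
    have -> : p k * expR (w k - v k - L) - p k = p k * (expR (w k - v k - L) - 1) by ring.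
    apply: ler_wpM2l => //; rewrite lerBrDr addrC; exact: expR_ge1Dx.
  rewrite sumrB; under eq_bigr do rewrite e.
  by rewrite -mulr_suml -/S mulfV ?gt_eqF // sp subrr.
have H2 : \sum_k p k * (w k - v k - L) = \sum_k p k * (w k - v k) - L.
  rewrite -{2}[L]mul1r -sp mulr_suml -sumrB; apply: eq_bigr => k _; ring.
move: H1; rewrite H2 /L => H1; lra.
Qed.

End Soft.

Theorem lemma3p2 (R : realType) (d : measure_display) (X : measurableType d)
  (C : finType) (rho : C -> R) (D : C -> probability X R) (n N : nat)
  (f : X -> 'rV[R]_n) :
  (forall c, 0 < rho c) ->
  \sum_(c : C) rho c = 1 ->
  (#|C| <= N)%N ->
  (forall j : 'I_n, measurable_fun setT (fun x => f x 0 j)) ->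
  (forall (c : C) (j : 'I_n), (D c).-integrable setT (fun x => (f x 0 j)%:E)) ->
  (L_sup rho D f <= L_sup_mu rho D f)%E /\
  (L_sup_mu rho D f <= ((pcc rho N)^-1)%:E * L_un rho D f N)%E.
Proof.
move=> rho_gt0 rho_sum CN fm fint.
have rho0 : forall k, 0 <= rho k by move=> k; exact/ltW.
have C0 : (0 < #|C|)%N.
  rewrite lt0n; apply/eqP => C0; move: rho_sum.
  rewrite big_pred0 => [/esym/eqP|k]; first by rewrite oner_eq0.
  by have := card0_eq C0 k; rewrite !inE.
split.
  by apply: ereal_inf_lbound; exists (W_mu D f).
set pc := pcc rho N.
have pcE : pc = Wt rho N [set: C].
  rewrite /pc /pcc /Wt; apply: eq_bigl => t; rewrite /cov.
  by apply: eq_forallb => k; rewrite finset.in_setT.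
have pc0 : 0 < pc by rewrite pcE; apply: Wt_pos.
suff H : (pc%:E * L_sup_mu rho D f <= L_un rho D f N)%E.
  rewrite -(mul1e (L_sup_mu rho D f)) -(mulVf (lt0r_neq0 pc0)) EFinM -muleA.
  by apply: lee_wpmul2l => //; rewrite lee_fin invr_ge0 ltW.
rewrite /L_sup_mu /sup_loss_W /L_un.
rewrite ge0_sume_distrr; last first.
  move=> c _; apply: mule_ge0; first by rewrite lee_fin.
  by apply: integral_ge0 => x _; rewrite lee_fin softmax_ge0.
apply: lee_sum => c _; rewrite muleCA; apply: lee_wpmul2l; first by rewrite lee_fin.
set W := W_mu D f.
have vE : forall x k, (W *m (f x)^T) (enum_rank k) 0 =
    \sum_(j < n) W (enum_rank k) j * f x 0 j.
  by move=> x k; rewrite !mxE; apply: eq_bigr => j _; rewrite [X in _ * X]mxE.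
have mLm : measurable_fun setT (fun x => softmax_loss (W *m (f x)^T) c).
  rewrite (_ : (fun x => _) = (fun x => ln (\sum_k expR (\sum_(j < n) W (enum_rank k) j * f x 0 j))
      - \sum_(j < n) W (enum_rank c) j * f x 0 j)); last first.
    by apply/funext => x; rewrite softmaxE; under eq_bigr do rewrite vE; rewrite vE.
  apply: measurable_realfun.measurable_funB.
    apply: measurableT_comp; first exact: measurable_realfun.measurable_ln.
    apply: measurable_sum => k; apply: measurableT_comp; first exact: measurable_realfun.measurable_expR.
    apply: measurable_sum => j; apply: measurable_realfun.measurable_funM => //; exact: measurable_cst.
  apply: measurable_sum => j; apply: measurable_realfun.measurable_funM => //; exact: measurable_cst.
rewrite -ge0_integralZl_EFin //; last 3 first.
  by move=> x _; rewrite lee_fin softmax_ge0.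
  exact/measurable_realfun.measurable_EFinP.
  exact: ltW.
apply: le_int_ge0 => x; first by rewrite lee_fin mulr_ge0 ?softmax_ge0 // ltW.
pose u := fun y => dotr (f x) (f y).
pose v := fun k => (W *m (f x)^T) (enum_rank k) 0.
pose Z := \sum_k expR (v k).
pose p := fun k => expR (v k) / Z.
have uE : forall y, (u y)%:E = (\sum_(j < n) (f x 0 j)%:E * (f y 0 j)%:E)%E.
  by move=> y; rewrite /u /dotr -sumEFin; apply: eq_bigr => j _; rewrite EFinM.
have intu : forall k, (D k).-integrable setT (fun y => (u y)%:E).
  move=> k; rewrite (_ : (fun y => _) =
    (fun y => \sum_(j < n) (f x 0 j)%:E * (f y 0 j)%:E)%E); last first.
    by apply/funext => y; rewrite uE.
  by apply: integrable_sum => // j _; apply: integrableZl => //; exact: fint.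
have intuv : forall k, (\int[D k]_y (u y)%:E = (v k)%:E)%E.
  move=> k; under eq_integral do rewrite uE.
  rewrite integral_sum //; last by move=> j; apply: integrableZl => //; exact: fint.
  rewrite /v vE -sumEFin; apply: eq_bigr => j _.
  rewrite integralZl //; last exact: fint.
  rewrite /W /W_mu mxE enum_rankK /Rintegral EFinM fineK; first by rewrite muleC.
  exact: integrable_fin_num (fint k j).
have LmE : softmax_loss (W *m (f x)^T) c = ln Z - v c by rewrite softmaxE.
set Wc := Wt rho N (~: [set c]).
have pcWc : pc <= Wc by rewrite pcE; apply: Wt_mono => //; apply: finset.subsetT.
have Wc0 : 0 <= Wc by apply: Wt_ge0.
apply: (@le_trans _ _ (Wc * softmax_loss (W *m (f x)^T) c)%:E).
  by rewrite -EFinM lee_fin ler_wpM2r ?softmax_ge0.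
rewrite LmE.
have -> : Wc * (ln Z - v c) =
  (Wc * (ln Z - v c) + Wc * (1 - p c) * v c) + (Wc * (p c - 1)) * v c by ring.
have lossE : forall xp s, un_loss_pt f x xp s =
    ln (expR (u xp) + 0 + \sum_(y <- s) expR (u y)) - u xp.
  move=> xp s; have hpos : 0 < expR (u xp) + \sum_(y <- s) expR (u y).
    apply: (lt_le_trans (expR_gt0 (u xp))); rewrite lerDl.
    by apply: sumr_ge0 => *; exact/ltW/expR_gt0.
  rewrite addr0 /un_loss_pt lnM ?posrE ?expR_gt0 ?invr_gt0 // lnV ?posrE // expRK.
  by rewrite opprD opprK addrC.
apply: (int_lb_aff intu intuv c).
  move=> xp; apply: ne_ge0 => // s; rewrite lossE lee_fin -addrA.
  apply: loss_ge0; rewrite add0r.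
  by apply: sumr_ge0 => *; exact/ltW/expR_gt0.
move=> xp.
set a := u xp.
have gib : forall w : C -> R, w c = a ->
    (ln Z - v c - (a - v c)) + \sum_k p k * (w k - v k) <= ln (\sum_k expR (w k)) - a.
  move=> w wc; have := gibbs_gen c v w; rewrite -/Z /p => h; lra.
have H := claim rho0 intu intuv gib N (B := ~: [set c]) (w := fun _ => a) (S0 := 0)
  (g := fun s => (un_loss_pt f x xp s)%:E).
rewrite finset.setCK !big_set1 /= in H.
apply: le_trans (H _ _ _ _ _).
- by rewrite lee_fin le_eqVlt; apply/orP; left; apply/eqP; rewrite /Wc; ring.
- by rewrite finset.in_setC finset.in_set1 eqxx.
- by [].
- by [].
- by rewrite addr0.
- by move=> s; rewrite lossE.
Qed.
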